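(* Let $D=\mathbb S^{d-1}$ and consider the fully connected network $f^1(x)=W^0Vx$, $f^{\ell+1}(x)=W^\ell m_\ell^{-1/2}\sigma(f^\ell(x))$ for $\ell=1,\dots,L$, with scalar output $f^{L+1}$ (so $m_{L+1}=1$), where $V\in\mathbb R^{m_0\times d}$ satisfies $V^TV=I$, $W^\ell\in\mathbb R^{m_{\ell+1}\times m_\ell}$, the last-layer weights $W^L$ have entries in $\{-1,+1\}$, and only $\theta=W^{L-1}$ is trained. Assume the activation (which may differ from layer to layer) satisfies $|\sigma(x)|\lesssim|x|$ and $|\sigma(x)-\sigma(\bar x)|\lesssim|x-\bar x|$, that $m_L\sim m_{L-1}\sim\dots\sim m_0$, and that the gradient descent iterates (for the loss $\ell(\theta)=\frac12\|f^{L+1}-f\|_{L_2(D)}^2$ with target $f$ and step $\theta^{k+1}=\theta^k-\gamma\nabla_\theta\ell(\theta^k)$) satisfy $\|W^\ell(n)\|m_\ell^{-1/2}\lesssim1$. Then, with $\kappa^n=f^{L+1}_{\theta^n}-f$, $$\|\nabla_\theta\ell(\theta^n)\|\lesssim\|\kappa^n\|_{L_2(D)}.$$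
   Context: $\|\cdot\|$ denotes the spectral norm of a matrix; $W^\ell(n)$ denotes the layer-$\ell$ weights after $n$ gradient descent steps. $a\lesssim b$ (and $\sim$) means inequality up to constants independent of the widths (possibly depending on $L$ and $d$). *)

(* Defs.v *)
From HB Require Import structures.
From mathcomp Require Import all_boot all_order all_algebra.
From mathcomp Require Import all_classical all_reals all_analysis.
Set Implicit Arguments. Unset Strict Implicit. Unset Printing Implicit Defensive.
Import Order.TTheory GRing.Theory Num.Theory.
Import numFieldNormedType.Exports.
Local Open Scope classical_set_scope.
Local Open Scope ring_scope.

Section Defs.
Variable R : realType.

Definition vnorm n (v : 'cV[R]_n) : R := Num.sqrt (\sum_i (v i 0) ^+ 2).

Definition specnorm m n (A : 'M[R]_(m, n)) : R :=
  sup [set vnorm (A *m v) | v in [set v : 'cV[R]_n | vnorm v <= 1]].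

Definition BorelcV (d : nat) := g_sigma_algebraType (@open 'cV[R]_d).

Definition sphere (d : nat) : set (BorelcV d) := [set x : 'cV[R]_d | vnorm x = 1].

Definition isqrt (k : nat) : R := (Num.sqrt (k%:R))^-1.

Definition cmap n (s : R -> R) (v : 'cV[R]_n) : 'cV[R]_n := \col_i s (v i 0).

(* Network with widths m : nat -> nat, weights W l : 'M_(m l.+1, m l),
   activations sig l, input embedding V : 'M_(m 0, d).
   act 0 x = V x ; act (l+1) x = m_{l+1}^{-1/2} sig_{l+1}(f^{l+1}(x)),
   where f^{l+1}(x) = W l (act l x). *)
Fixpoint act (m : nat -> nat) d (V : 'M[R]_(m 0, d))
  (W : forall l, 'M[R]_(m l.+1, m l)) (sig : nat -> R -> R)
  (x : 'cV[R]_d) (l : nat) : 'cV[R]_(m l) :=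
  match l with
  | 0 => V *m x
  | l'.+1 => isqrt (m l'.+1) *: cmap (sig l'.+1) (W l' *m act V W sig x l')
  end.

Definition preact (m : nat -> nat) d (V : 'M[R]_(m 0, d))
  (W : forall l, 'M[R]_(m l.+1, m l)) (sig : nat -> R -> R)
  (x : 'cV[R]_d) (l : nat) : 'cV[R]_(m l.+1) := W l *m act V W sig x l.

(* Scalar network output f^{L+1}(x) for depth L (m (L+1) = 1 is assumed
   in the theorem; the sum is then over the unique output coordinate). *)
Definition netout (m : nat -> nat) d (V : 'M[R]_(m 0, d))
  (W : forall l, 'M[R]_(m l.+1, m l)) (sig : nat -> R -> R) (L : nat)
  (x : 'cV[R]_d) : R := \sum_i (preact V W sig x L) i 0.

(* Loss as a function of the trained layer theta = W^{L-1} (here L = K+1,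
   so the trained layer has index K), the other layers taken from W. *)
Definition loss (m : nat -> nat) d (mu : {measure set (BorelcV d) -> \bar R})
  (V : 'M[R]_(m 0, d)) (W : forall l, 'M[R]_(m l.+1, m l))
  (sig : nat -> R -> R) (K : nat) (f : 'cV[R]_d -> R)
  (theta : 'M[R]_(m K.+1, m K)) : R :=
  2^-1 * Rintegral mu (@sphere d)
    (fun x => (netout V (@dfwith _ (fun l => 'M[R]_(m l.+1, m l)) W K theta) sig K.+1 x - f x) ^+ 2).

Definition L2norm d (mu : {measure set (BorelcV d) -> \bar R})
  (g : 'cV[R]_d -> R) : R :=
  Num.sqrt (Rintegral mu (@sphere d) (fun x => g x ^+ 2)).

Definition is_gradient p q (F : 'M[R]_(p, q) -> R) (theta G : 'M[R]_(p, q)) :=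
  differentiable F theta /\
  forall H : 'M[R]_(p, q), 'd F theta H = \sum_i \sum_j G i j * H i j.

End Defs.

(* Main.v *)
Require Import Defs.
From HB Require Import structures.
From mathcomp Require Import all_boot all_order all_algebra.
From mathcomp Require Import all_classical all_reals all_analysis.
From mathcomp Require Import ring lra zify.
From mathcomp Require Import measurable_realfun measurable_fun_approximation lebesgue_integrable lebesgue_Rintegral.
Import Order.TTheory GRing.Theory Num.Theory.
Import numFieldNormedType.Exports.
Local Open Scope classical_set_scope.
Local Open Scope ring_scope.

Set Implicit Arguments. Unset Strict Implicit. Unset Printing Implicit Defensive.
Section VN.
Variable R : realType.

Lemma sumsq_ge0 n (v : 'cV[R]_n) : 0 <= \sum_i (v i 0) ^+ 2.
Proof. by apply: sumr_ge0 => i _; exact: sqr_ge0. Qed.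

Lemma vnorm_ge0 n (v : 'cV[R]_n) : 0 <= vnorm v.
Proof. exact: sqrtr_ge0. Qed.

Lemma vnorm_sq n (v : 'cV[R]_n) : vnorm v ^+ 2 = \sum_i (v i 0) ^+ 2.
Proof. by rewrite /vnorm sqr_sqrtr // sumsq_ge0. Qed.

Lemma vnorm_le_sq n k (p : 'cV[R]_n) (q : 'cV[R]_k) c : 0 <= c ->
  \sum_i (p i 0) ^+ 2 <= c ^+ 2 * \sum_i (q i 0) ^+ 2 -> vnorm p <= c * vnorm q.
Proof.
move=> c0 H.
rewrite -(ler_pXn2r (n:=2)) // ?nnegrE ?mulr_ge0 ?vnorm_ge0 //.
by rewrite exprMn !vnorm_sq.
Qed.

Lemma vnorm_le n (p q : 'cV[R]_n) c : 0 <= c ->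
  (forall i, `|p i 0| <= c * `|q i 0|) -> vnorm p <= c * vnorm q.
Proof.
move=> c0 H; apply: vnorm_le_sq => //; rewrite mulr_sumr; apply: ler_sum => i _.
rewrite -exprMn -real_normK ?num_real // -[X in _ <= X]real_normK ?num_real //.
rewrite ler_pXn2r // ?nnegrE //; first idtac.
by rewrite normrM (ger0_norm c0).
Qed.

Lemma vnormZ n (a : R) (v : 'cV[R]_n) : vnorm (a *: v) = `|a| * vnorm v.
Proof.
apply/eqP; rewrite eq_le; apply/andP; split.
  by apply: vnorm_le => // i; rewrite mxE normrM.
have [->|a0] := eqVneq a 0; first by rewrite normr0 mul0r vnorm_ge0.
rewrite mulrC -ler_pdivlMr ?normr_gt0 // mulrC.
apply: vnorm_le; first by rewrite invr_ge0.
by move=> i; rewrite mxE normrM mulrA mulVf ?normr_eq0 // mul1r.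
Qed.

Lemma CS n (a b : 'I_n -> R) :
  (\sum_i a i * b i) ^+ 2 <= (\sum_i a i ^+ 2) * (\sum_i b i ^+ 2).
Proof.
set A := \sum_i a i ^+ 2; set B := \sum_i b i ^+ 2; set S := \sum_i a i * b i.
have B0 : 0 <= B by apply: sumr_ge0 => i _; exact: sqr_ge0.
have key : \sum_i (a i * B - b i * S) ^+ 2 = B * (A * B - S ^+ 2).
  transitivity (\sum_i (B ^+ 2 * a i ^+ 2 - (2 * B * S) * (a i * b i) + S ^+ 2 * b i ^+ 2)).
    by apply: eq_bigr => i _; ring.
  rewrite big_split /= sumrB -!mulr_sumr -/A -/B -/S; ring.
have [Bz|Bp] := eqVneq B 0.
  have bz : forall i, b i = 0.
    move=> i; apply/eqP; rewrite -sqrf_eq0; apply/eqP.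
    by move/eqP: Bz; rewrite psumr_eq0 => [/allP/(_ i (mem_index_enum _))/implyP/(_ isT)/eqP|j _]; [|exact: sqr_ge0].
  have -> : S = 0 by rewrite /S big1 // => i _; rewrite bz mulr0.
  by rewrite expr0n /= mulr_ge0 // sumr_ge0 // => i _; exact: sqr_ge0.
have Bp' : 0 < B by rewrite lt_def Bp B0.
have : 0 <= B * (A * B - S ^+ 2) by rewrite -key sumr_ge0 // => i _; exact: sqr_ge0.
by rewrite pmulr_rge0 // subr_ge0 mulrC.
Qed.


Lemma vnorm_eq0 n (v : 'cV[R]_n) : vnorm v = 0 -> v = 0.
Proof.
move=> /eqP; rewrite /vnorm sqrtr_eq0 => H.
have H0 : \sum_i (v i 0) ^+ 2 = 0.
  by apply/eqP; rewrite eq_le H sumsq_ge0.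
apply/matrixP => i j; rewrite ord1 mxE.
have := @psumr_eq0P _ _ _ (fun k => v k 0 ^+ 2) (fun k _ => sqr_ge0 (v k 0)) H0 i isT.
by move/eqP; rewrite sqrf_eq0 => /eqP.
Qed.

Lemma sumsq_le_sqsum n (x : 'I_n -> R) : (forall i, 0 <= x i) ->
  \sum_i x i ^+ 2 <= (\sum_i x i) ^+ 2.
Proof.
move=> x0; rewrite expr2 mulr_suml; apply: ler_sum => i _.
rewrite expr2 ler_wpM2l //.
by rewrite (bigD1 i) //= lerDl sumr_ge0.
Qed.

Lemma vnorm_le_l1 n (w : 'cV[R]_n) : vnorm w <= \sum_i `|w i 0|.
Proof.
rewrite -(ler_pXn2r (n:=2)) // ?nnegrE ?vnorm_ge0 ?sumr_ge0 // vnorm_sq.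
apply: le_trans _ (@sumsq_le_sqsum _ (fun i => `|w i 0|) (fun i => normr_ge0 _)).
by apply: ler_sum => i _; rewrite real_normK ?num_real.
Qed.

Lemma coord_le_vnorm n (v : 'cV[R]_n) j : `|v j 0| <= vnorm v.
Proof.
rewrite -(ler_pXn2r (n:=2)) // ?nnegrE ?vnorm_ge0 // vnorm_sq real_normK ?num_real //.
by rewrite (bigD1 j) //= lerDl sumr_ge0 // => i _; exact: sqr_ge0.
Qed.

Definition specset m n (A : 'M[R]_(m, n)) :=
  [set vnorm (A *m v) | v in [set v : 'cV[R]_n | vnorm v <= 1]].

Lemma specset_ub m n (A : 'M[R]_(m, n)) : has_ubound (specset A).
Proof.
exists (\sum_i \sum_j `|A i j|) => _ [v /= v1 <-].
apply: le_trans (vnorm_le_l1 _) _; apply: ler_sum => i _.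
rewrite mxE; apply: le_trans (ler_norm_sum _ _ _) _; apply: ler_sum => j _.
rewrite normrM -[X in _ <= X]mulr1 ler_wpM2l //.
exact: le_trans (coord_le_vnorm _ _) v1.
Qed.

Lemma specset_0 m n (A : 'M[R]_(m, n)) : specset A 0.
Proof.
exists 0; rewrite /= ?mulmx0 //.
  by rewrite /vnorm big1 ?sqrtr0 // => i _; rewrite mxE expr0n.
by rewrite /vnorm big1 ?sqrtr0 // => i _; rewrite mxE expr0n.
Qed.

Lemma specnorm_ge0 m n (A : 'M[R]_(m, n)) : 0 <= specnorm A.
Proof. exact: (ub_le_sup (specset_ub A) (specset_0 A)). Qed.

Lemma vnorm0 n : vnorm (0 : 'cV[R]_n) = 0.
Proof. by rewrite /vnorm big1 ?sqrtr0 // => i _; rewrite mxE expr0n. Qed.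

Lemma vnorm_mulmx m n (A : 'M[R]_(m, n)) v : vnorm (A *m v) <= specnorm A * vnorm v.
Proof.
have [v0|vn0] := eqVneq (vnorm v) 0.
  by rewrite v0 mulr0 (vnorm_eq0 v0) mulmx0 vnorm0.
have vp : 0 < vnorm v by rewrite lt_def vn0 vnorm_ge0.
have H : specset A (vnorm (A *m ((vnorm v)^-1 *: v))).
  exists ((vnorm v)^-1 *: v) => //=.
  by rewrite vnormZ ger0_norm ?invr_ge0 ?vnorm_ge0 // mulVf.
have := ub_le_sup (specset_ub A) H.
rewrite -scalemxAr vnormZ ger0_norm ?invr_ge0 ?vnorm_ge0 //.
by rewrite mulrC ler_pdivrMr // mulrC.
Qed.

Lemma specnorm_le m n (A : 'M[R]_(m, n)) M :
  (forall v, vnorm v <= 1 -> vnorm (A *m v) <= M) -> specnorm A <= M.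
Proof.
move=> H; apply: ge_sup; first by exists 0; exact: specset_0.
by move=> _ [v /= v1 <-]; exact: H.
Qed.

Lemma sum_le_vnorm n (w : 'cV[R]_n) : `|\sum_i w i 0| <= Num.sqrt (n%:R) * vnorm w.
Proof.
rewrite -(ler_pXn2r (n:=2)) // ?nnegrE ?mulr_ge0 ?vnorm_ge0 ?sqrtr_ge0 //.
rewrite exprMn vnorm_sq sqr_sqrtr ?ler0n // real_normK ?num_real //.
have := CS (fun _ => 1) (fun i => w i 0).
rewrite /=; under eq_bigr do rewrite mul1r.
by rewrite sumr_const card_ord expr1n.
Qed.

Lemma sumsq_mx n (w : 'cV[R]_n) : \sum_i (w i 0) ^+ 2 = (w^T *m w) 0 0.
Proof. by rewrite mxE; apply: eq_bigr => i _; rewrite mxE expr2. Qed.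

Lemma vnorm_orth m d (V : 'M[R]_(m, d)) x : V^T *m V = 1%:M -> vnorm (V *m x) = vnorm x.
Proof.
move=> HV; rewrite /vnorm !sumsq_mx trmx_mul -mulmxA (mulmxA V^T) HV mul1mx //.
Qed.

End VN.

Section Meas.
Variable R : realType.

Lemma lip_cont (s : R -> R) c : (forall x y, `|s x - s y| <= c * `|x - y|) -> continuous s.
Proof.
move=> H x; apply/cvgrPdist_lt => e e0.
have c0 : 0 <= c.
  have := H 1 0; rewrite subr0 normr1 mulr1; apply: le_trans; exact: normr_ge0.
have c1 : 0 < c + 1 by lra.
apply/nbhs_ballP; exists (e / (c + 1)); first by rewrite /= divr_gt0.
move=> y /= hy.
apply: le_lt_trans (H x y) _.
move: hy; rewrite ltr_pdivlMr // => hy.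
have := normr_ge0 (x - y); nra.
Qed.

Lemma mcoord d (i : 'I_d) : measurable_fun setT (fun x : BorelcV R d => x i 0).
Proof.
apply: (measurability _ (RGenOpens.measurableE R)).
move=> _ [_ [a [b ->]] <-]; apply: measurableI => //.
apply: sub_sigma_algebra.
have := @coord_continuous R d 1 i 0.
move/continuousP; apply; exact: interval_open.
Qed.

End Meas.

Lemma mxBE (R : realType) p q (P Q : 'M[R]_(p, q)) i j : (P - Q) i j = P i j - Q i j.
Proof. by rewrite !mxE. Qed.

Lemma isqrt_ge0 (R : realType) k : 0 <= isqrt R k.
Proof. by rewrite /isqrt invr_ge0 sqrtr_ge0. Qed.

Section Net.
Variable R : realType.
Variables (m : nat -> nat) (d : nat) (V : 'M[R]_(m 0%N, d)) (sig : nat -> R -> R).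
Variables (W : forall l, 'M[R]_(m l.+1, m l)) (K : nat).

Definition aK x := act V W sig x K.
Definition gfun (th : 'M[R]_(m K.+1, m K)) (x : 'cV[R]_d) : R :=
  \sum_i (W K.+1 *m (isqrt R (m K.+1) *: cmap (sig K.+1) (th *m aK x))) i 0.

Lemma act_dfwith th x l : (l <= K)%N ->
  act V (@dfwith _ (fun l => 'M[R]_(m l.+1, m l)) W K th) sig x l = act V W sig x l.
Proof.
elim: l => [//|l IH] hl /=.
rewrite IH ?(ltnW hl) //.
by rewrite dfwithout // neq_ltn hl orbT.
Qed.

Lemma netout_dfwith th x :
  netout V (@dfwith _ (fun l => 'M[R]_(m l.+1, m l)) W K th) sig K.+1 x = gfun th x.
Proof.
rewrite /netout /preact /gfun /aK /=.
by rewrite act_dfwith // dfwithin dfwithout // neq_ltn ltnSn.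
Qed.

Lemma netout_W x : netout V W sig K.+1 x = gfun (W K) x.
Proof. by []. Qed.

Lemma vnorm_cmap_lip n (s : R -> R) c (u v : 'cV[R]_n) :
  (forall a b, `|s a - s b| <= c * `|a - b|) ->
  vnorm (cmap s u - cmap s v) <= c * vnorm (u - v).
Proof.
move=> H.
have c0 : 0 <= c.
  have := H 1 0; rewrite subr0 normr1 mulr1; apply: le_trans; exact: normr_ge0.
by apply: vnorm_le => // i; rewrite !mxBE !mxE.
Qed.

Lemma vnorm_cmap n (s : R -> R) c (u : 'cV[R]_n) : 0 <= c ->
  (forall a, `|s a| <= c * `|a|) -> vnorm (cmap s u) <= c * vnorm u.
Proof. by move=> c0 H; apply: vnorm_le => // i; rewrite !mxE. Qed.

Lemma gfun_lip (Csig : R) th1 th2 x :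
  (forall l a b, `|sig l a - sig l b| <= Csig * `|a - b|) ->
  `|gfun th1 x - gfun th2 x| <=
  Num.sqrt ((m K.+2)%:R) * (specnorm (W K.+1) * isqrt R (m K.+1)) * Csig *
    vnorm ((th1 - th2) *m aK x).
Proof.
move=> H.
have c0 : 0 <= Csig.
  have := H 0%N 1 0; rewrite subr0 normr1 mulr1; apply: le_trans; exact: normr_ge0.
set w := W K.+1 *m (isqrt R (m K.+1) *:
   (cmap (sig K.+1) (th1 *m aK x) - cmap (sig K.+1) (th2 *m aK x))).
have -> : gfun th1 x - gfun th2 x = \sum_i w i 0.
  rewrite /gfun -sumrB; apply: eq_bigr => i _.
  by rewrite /w scalerBr mulmxBr mxBE.
apply: le_trans (sum_le_vnorm w) _.
rewrite -!mulrA ler_wpM2l ?sqrtr_ge0 //.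
apply: le_trans (vnorm_mulmx _ _) _.
rewrite ler_wpM2l ?specnorm_ge0 // vnormZ ger0_norm ?isqrt_ge0 //.
rewrite ler_wpM2l ?isqrt_ge0 //.
rewrite mulmxBl; exact: vnorm_cmap_lip.
Qed.

Lemma act_bound (Csig CW cm : R) x :
  vnorm x = 1 -> V^T *m V = 1%:M -> 0 <= Csig -> 0 <= CW -> 0 <= cm ->
  (forall l a, `|sig l a| <= Csig * `|a|) ->
  (forall l, (l < K)%N -> specnorm (W l) * isqrt R (m l) <= CW) ->
  (forall l, (l <= K)%N -> (0 < m l)%N) ->
  (forall l, (l < K)%N -> (m l)%:R <= cm * (m l.+1)%:R) ->
  forall l, (l <= K)%N -> vnorm (act V W sig x l) <= (Csig * CW * Num.sqrt cm) ^+ l.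
Proof.
move=> x1 HV Cs0 CW0 cm0 Hs HW Hm Hcm.
elim => [|l IH] hl /=.
  by rewrite vnorm_orth // x1 expr0.
have hl' : (l < K)%N by [].
have ml : 0 < Num.sqrt ((m l)%:R : R) by rewrite sqrtr_gt0 ltr0n Hm // ltnW.
have ml1 : 0 < Num.sqrt ((m l.+1)%:R : R) by rewrite sqrtr_gt0 ltr0n Hm.
have HS : specnorm (W l) <= CW * Num.sqrt (m l)%:R.
  by rewrite -ler_pdivrMr //; have := HW l hl'; rewrite /isqrt.
have HQ : isqrt R (m l.+1) * specnorm (W l) <= CW * Num.sqrt cm.
  rewrite /isqrt mulrC ler_pdivrMr //.
  apply: le_trans HS _; rewrite -mulrA ler_wpM2l // -sqrtrM //.
  by rewrite ler_sqrt ?mulr_ge0 ?ler0n // Hcm.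
rewrite vnormZ ger0_norm ?isqrt_ge0 // exprS.
apply: le_trans (ler_wpM2l (isqrt_ge0 _ _) (vnorm_cmap _ Cs0 (Hs l.+1))) _.
rewrite mulrCA.
apply: le_trans (ler_wpM2l Cs0 (ler_wpM2l (isqrt_ge0 _ _) (vnorm_mulmx _ _))) _.
rewrite (mulrA (isqrt _ _)) -(mulrA Csig CW) -(mulrA Csig (CW * _)) ler_wpM2l //.
apply: ler_pM; rewrite ?mulr_ge0 ?isqrt_ge0 ?specnorm_ge0 ?vnorm_ge0 //.
by rewrite mulrA; exact: IH (ltnW hl).
Qed.

End Net.

Section Meas2.
Variable R : realType.
Variables (m : nat -> nat) (d : nat) (V : 'M[R]_(m 0%N, d)) (sig : nat -> R -> R).
Variables (W : forall l, 'M[R]_(m l.+1, m l)) (K : nat).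
Hypothesis sig_cont : forall l, continuous (sig l).

Lemma act_meas l i : measurable_fun setT (fun x : BorelcV R d => act V W sig x l i 0).
Proof.
elim: l i => [|l IH] i.
  have -> : (fun x : BorelcV R d => act V W sig x 0 i 0) =
            (fun x : BorelcV R d => \sum_j V i j * x j 0).
    by apply/funext => x; rewrite /= mxE.
  apply: measurable_sum => j; apply: measurable_funM; first exact: measurable_cst.
  exact: mcoord.
have -> : (fun x : BorelcV R d => act V W sig x l.+1 i 0) =
  (fun x : BorelcV R d => isqrt R (m l.+1) *
     sig l.+1 (\sum_j W l i j * act V W sig x l j 0)).
  by apply/funext => x; rewrite /= !mxE.
apply: measurable_funM; first exact: measurable_cst.
apply: measurableT_comp; first exact: continuous_measurable_fun.
apply: measurable_sum => j; apply: measurable_funM; first exact: measurable_cst.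
exact: IH.
Qed.

Lemma gfun_meas th : measurable_fun setT (fun x : BorelcV R d => @gfun _ _ _ V sig W K th x).
Proof.
have -> : (fun x : BorelcV R d => @gfun _ _ _ V sig W K th x) =
  (fun x : BorelcV R d => \sum_i \sum_j W K.+1 i j * (isqrt R (m K.+1) *
     sig K.+1 (\sum_k th j k * act V W sig x K k 0))).
  by apply/funext => x; rewrite /gfun /aK; apply: eq_bigr => i _; rewrite !mxE;
    apply: eq_bigr => j _; rewrite !mxE.
apply: measurable_sum => i; apply: measurable_sum => j.
apply: measurable_funM; first exact: measurable_cst.
apply: measurable_funM; first exact: measurable_cst.
apply: measurableT_comp; first exact: continuous_measurable_fun.
apply: measurable_sum => k; apply: measurable_funM; first exact: measurable_cst.
exact: act_meas.
Qed.

End Meas2.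

Lemma vnorm_meas (R : realType) d : measurable_fun setT (fun x : BorelcV R d => vnorm x).
Proof.
rewrite /vnorm; apply: measurableT_comp; first exact: continuous_measurable_fun (@sqrt_continuous R).
apply: measurable_sum => i; apply: measurable_funX; exact: mcoord.
Qed.

Lemma sphere_meas (R : realType) d : measurable (@sphere R d).
Proof.
have := @vnorm_meas R d measurableT _ (measurable_set1 (1 : R)).
by rewrite setTI.
Qed.

Section RealLemmas.
Variable R : realType.

Lemma sq_split (a b e : R) : 0 < e ->
  (a + b) ^+ 2 <= (1 + e) * a ^+ 2 + (1 + e^-1) * b ^+ 2.
Proof.
move=> e0; set c := e^-1.
have c0 : 0 < c by rewrite invr_gt0.
have ec : e * c = 1 by rewrite mulfV // gt_eqF.
have h1 := sqr_ge0 (e * a - b).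
have h2 : 0 <= c * (e * a - b) ^+ 2 by rewrite mulr_ge0 // ltW.
have e2 : c * (e * a - b) ^+ 2 = e * (e * c) * a ^+ 2 - 2 * (e * c) * a * b + c * b ^+ 2
  by ring.
rewrite e2 ec in h2; nra.
Qed.

Lemma amgm_lim (X A B : R) : 0 <= A -> 0 <= B ->
  (forall s, 0 < s -> X <= (s * A ^+ 2 + B ^+ 2 / s) / 2) -> X <= A * B.
Proof.
move=> A0 B0 H; apply/ler_addgt0Pr => e e0.
set dl := e / (A + B + 1 + e).
have den : 0 < A + B + 1 + e by lra.
have dl0 : 0 < dl by rewrite divr_gt0.
have dl1 : dl * (A + B + 1 + e) = e by rewrite /dl mulfVK // gt_eqF.
have a0 : 0 < A + dl by lra.
have b0 : 0 < B + dl by lra.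
have := H ((B + dl) / (A + dl)) (divr_gt0 b0 a0).
have h1 : (B + dl) / (A + dl) * A ^+ 2 <= (A + dl) * (B + dl).
  have hA : A ^+ 2 <= (A + dl) ^+ 2 by nra.
  rewrite mulrAC ler_pdivrMr //.
  have -> : (A + dl) * (B + dl) * (A + dl) = (B + dl) * (A + dl) ^+ 2 by ring.
  by rewrite ler_wpM2l // ltW.
have h2 : B ^+ 2 / ((B + dl) / (A + dl)) <= (A + dl) * (B + dl).
  have hB : B ^+ 2 <= (B + dl) ^+ 2 by nra.
  rewrite invf_div mulrA ler_pdivrMr //.
  have -> : (A + dl) * (B + dl) * (B + dl) = (A + dl) * (B + dl) ^+ 2 by ring.
  by rewrite mulrC ler_wpM2l // ltW.
have dle : dl <= 1 by rewrite /dl ler_pdivrMr //; lra.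
have h3 : (A + dl) * (B + dl) <= A * B + e.
  have : dl * (A + B + dl) <= e.
    by rewrite -[X in _ <= X]dl1 ler_wpM2l; [|exact: ltW|lra].
  nra.
move=> hX; apply: le_trans hX _.
rewrite ler_pdivrMr //; lra.
Qed.

End RealLemmas.

Section DiffLemma.
Variables (R : realType) (p q : nat).

Lemma diff_le (F : 'M[R]_(p, q) -> R) (th H : 'M[R]_(p, q)) (P Q : R) :
  differentiable F th ->
  (forall t, 0 < t -> F (t *: H + th) - F th <= t * P + t ^+ 2 * Q) ->
  'd F th H <= P.
Proof.
move=> dF Hb.
rewrite -deriveE //.
have cv := @diff_derivable _ _ _ F th H dF.
rewrite /derivable in cv.
set qf := (fun h : R => h^-1 *: ((F \o shift th) (h *: H) - F th)) in cv.
have cvr : qf @ 0^'+ --> 'D_H F th.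
  move=> A /cv; rewrite !nbhs_simpl /= /dnbhs /at_right /within /=.
  by apply: filterS => y Hy y0; apply: Hy; exact: lt0r_neq0.
apply/ler_addgt0Pr => e e0.
apply: (cvgr_to_le cvr).
have c1 : 0 < `|Q| + 1 by have := normr_ge0 Q; lra.
apply/nbhs_ballP; exists (e / (`|Q| + 1)); first by rewrite /= divr_gt0.
move=> y /= hy y0.
rewrite /ball /= sub0r normrN gtr0_norm // ltr_pdivlMr // in hy.
rewrite /qf /= -[X in X <= _]/(y^-1 * (F (y *: H + th) - F th)).
rewrite mulrC ler_pdivrMr //.
apply: le_trans (Hb y y0) _.
have : y * Q <= y * `|Q| by rewrite ler_wpM2l ?ler_norm // ltW.
have := normr_ge0 Q; nra.
Qed.

End DiffLemma.

Section Rank1.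
Variable R : realType.

Lemma rank1_bound n k (u : 'cV[R]_n) (v a : 'cV[R]_k) :
  vnorm u = 1 -> vnorm v <= 1 -> vnorm ((u *m v^T) *m a) <= vnorm a.
Proof.
move=> u1 v1.
rewrite -mulmxA (mx11_scalar (v^T *m a)) mul_mx_scalar vnormZ u1 mulr1.
have hs : `|(v^T *m a) 0 0| <= vnorm v * vnorm a.
  rewrite -(ler_pXn2r (n:=2)) // ?nnegrE ?mulr_ge0 ?vnorm_ge0 //.
  rewrite exprMn !vnorm_sq real_normK ?num_real // mxE.
  under eq_bigr do rewrite mxE.
  exact: CS (fun j => v j 0) (fun j => a j 0).
apply: le_trans hs _.
by rewrite -[X in _ <= X]mul1r ler_wpM2r ?vnorm_ge0.
Qed.

Lemma sum_rank1 p q (G : 'M[R]_(p, q)) (u : 'cV[R]_p) (v : 'cV[R]_q) :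
  \sum_i \sum_j G i j * (u *m v^T) i j = \sum_i u i 0 * (G *m v) i 0.
Proof.
apply: eq_bigr => i _; rewrite mxE mulr_sumr; apply: eq_bigr => j _.
by rewrite !mxE big_ord1 !mxE mulrCA.
Qed.

Lemma sum_normalized p (w : 'cV[R]_p) : vnorm w != 0 ->
  \sum_i ((vnorm w)^-1 *: w) i 0 * w i 0 = vnorm w.
Proof.
move=> wn0.
under eq_bigr do rewrite mxE -mulrA -expr2.
by rewrite -mulr_sumr -vnorm_sq expr2 mulKf.
Qed.

End Rank1.

Section Integ.
Variables (R : realType) (d : nat) (mu : {finite_measure set (BorelcV R d) -> \bar R}).

Lemma intZ (k : BorelcV R d -> R) c :
  mu.-integrable (@sphere R d) (EFin \o k) ->
  mu.-integrable (@sphere R d) (EFin \o (fun x => c * k x)).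
Proof.
move=> hk.
apply: (@eq_integrable _ _ _ mu _ (@sphere_meas R d) (fun x => (c%:E * (EFin \o k) x)%E)).
  by move=> x _ /=; rewrite EFinM.
exact: integrableZl (@sphere_meas R d) c _ hk.
Qed.

Lemma intD (k1 k2 : BorelcV R d -> R) :
  mu.-integrable (@sphere R d) (EFin \o k1) ->
  mu.-integrable (@sphere R d) (EFin \o k2) ->
  mu.-integrable (@sphere R d) (EFin \o (fun x => k1 x + k2 x)).
Proof.
move=> h1 h2.
apply: (@eq_integrable _ _ _ mu _ (@sphere_meas R d) (fun x => ((EFin \o k1) x + (EFin \o k2) x)%E)).
  by move=> x _; rewrite /= EFinD.
exact: integrableD (@sphere_meas R d) _ _ h1 h2.
Qed.

Lemma intC c : mu.-integrable (@sphere R d) (EFin \o (fun _ : BorelcV R d => c)).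
Proof. have := finite_measure_integrable_cst mu c (@sphere_meas R d). by []. Qed.

End Integ.

Theorem lemma5p3 (R : realType) (K d : nat)
  (mu : {finite_measure set (BorelcV R d) -> \bar R})
  (Csig CW cm : R) :
  exists C : R, 0 < C /\
  forall (m : nat -> nat) (V : 'M[R]_(m 0%N, d)) (sig : nat -> R -> R)
    (f : 'cV[R]_d -> R) (gamma : R)
    (Ws : nat -> forall l : nat, 'M[R]_(m l.+1, m l))
    (G : nat -> 'M[R]_(m K.+1, m K)),
  m K.+2 = 1%N ->
  (forall l, (l <= K.+1)%N -> (0 < m l)%N) ->
  (forall l1 l2, (l1 <= K.+1)%N -> (l2 <= K.+1)%N ->
     (m l1)%:R <= cm * (m l2)%:R) ->
  V^T *m V = 1%:M ->
  (forall l (x : R), `|sig l x| <= Csig * `|x|) ->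
  (forall l (x y : R), `|sig l x - sig l y| <= Csig * `|x - y|) ->
  measurable_fun (@sphere R d) (fun x : BorelcV R d => f x) ->
  mu.-integrable (@sphere R d) (fun x : BorelcV R d => (f x ^+ 2)%:E) ->
  0 < gamma ->
  (forall k (i : 'I_(m K.+2)) (j : 'I_(m K.+1)),
     Ws k K.+1 i j = 1 \/ Ws k K.+1 i j = -1) ->
  (forall k l, l != K -> Ws k l = Ws 0%N l) ->
  (forall k, is_gradient (@loss R m d mu V (Ws k) sig K f) (Ws k K) (G k)) ->
  (forall k, Ws k.+1 K = Ws k K - gamma *: G k) ->
  (forall k l, (l <= K.+1)%N -> specnorm (Ws k l) * isqrt R (m l) <= CW) ->
  forall n : nat,
    specnorm (G n) <= C * L2norm mu (fun x => netout V (Ws n) sig K.+1 x - f x).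
Proof.
set muD := fine (mu (@sphere R d)).
set Bx := (Csig * CW * Num.sqrt cm) ^+ K * CW * Csig * Num.sqrt muD.
exists (1 + `|Bx|); split; first by have := normr_ge0 Bx; lra.
move=> m V sig f gamma Ws G hm1 hmpos hcm hV hsig hlip hfm hfi hgam hWpm hWs
  hgrad hstep hspec n.
have mD := @sphere_meas R d.
have Cs0 : 0 <= Csig.
  have := hlip 0%N 1 0; rewrite subr0 normr1 mulr1; apply: le_trans; exact: normr_ge0.
have CW0 : 0 <= CW.
  by apply: le_trans (hspec n 0%N isT); rewrite mulr_ge0 ?specnorm_ge0 ?isqrt_ge0.
have cm0 : 0 <= cm.
  have := hcm 0%N 0%N isT isT; have := hmpos 0%N isT; rewrite -(ltr0n R) => h0 h1.
  nra.
have sig0 : forall l, sig l 0 = 0.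
  move=> l; apply/eqP; rewrite -normr_eq0 eq_le normr_ge0 andbT.
  by have := hsig l 0; rewrite normr0 mulr0.
have sigc : forall l, continuous (sig l) := fun l => lip_cont (hlip l).
set W := Ws n.
set th := W K.
pose g := @gfun R m d V sig W K.
set Q0 := Csig * CW * Num.sqrt cm.
have Q00 : 0 <= Q0 by rewrite /Q0 !mulr_ge0 ?sqrtr_ge0.
have abound : forall x, @sphere R d x -> vnorm (act V W sig x K) <= Q0 ^+ K.
  move=> x Dx; apply: (@act_bound R m d V sig W K Csig CW cm x) => //.
  - by move=> l hl; apply: hspec; lia.
  - by move=> l hl; apply: hmpos; lia.
  - by move=> l hl; apply: hcm; lia.
have sq1 : Num.sqrt ((m K.+2)%:R : R) = 1 by rewrite hm1 sqrtr1.
have glip : forall th1 th2 x, `|g th1 x - g th2 x| <=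
    CW * Csig * vnorm ((th1 - th2) *m act V W sig x K).
  move=> th1 th2 x; apply: le_trans (@gfun_lip R m d V sig W K Csig th1 th2 x hlip) _.
  rewrite sq1 mul1r ler_wpM2r ?vnorm_ge0 // ler_wpM2r //.
  exact: hspec.
have gfun0 : forall x, g 0 x = 0.
  move=> x; rewrite /g /gfun big1 // => i _.
  have -> : cmap (sig K.+1) ((0 : 'M[R]_(m K.+1, m K)) *m @aK R m d V sig W K x) = (0 : 'cV[R]_(m K.+1)).
    by apply/matrixP => i' j; rewrite !mxE big1 ?sig0 // => k _; rewrite mxE mul0r.
  by rewrite scaler0 mulmx0 mxE.
have gbound : forall th' x, @sphere R d x ->
    `|g th' x| <= CW * Csig * (specnorm th' * Q0 ^+ K).
  move=> th' x Dx; have := glip th' 0 x; rewrite gfun0 !subr0 => h.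
  apply: le_trans h _; rewrite ler_wpM2l ?mulr_ge0 //.
  apply: le_trans (vnorm_mulmx _ _) _; rewrite ler_wpM2l ?specnorm_ge0 //.
  exact: abound.
have gmeas : forall th', measurable_fun (@sphere R d) (fun x : BorelcV R d => g th' x).
  by move=> th'; apply: measurable_funTS; exact: (@gfun_meas R m d V sig W K sigc th').
have hmeas : forall th', measurable_fun (@sphere R d)
    (fun x : BorelcV R d => (g th' x - f x) ^+ 2).
  by move=> th'; apply: measurable_funX; apply: measurable_funB => //; exact: gmeas.
have hint : forall th', mu.-integrable (@sphere R d)
    (EFin \o (fun x : BorelcV R d => (g th' x - f x) ^+ 2)).
  move=> th'; set Bt := CW * Csig * (specnorm th' * Q0 ^+ K).
  have Bt0 : 0 <= Bt by rewrite /Bt !mulr_ge0 ?specnorm_ge0 ?exprn_ge0.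
  apply: (@le_integrable _ _ _ mu _ mD _
    (EFin \o (fun x : BorelcV R d => 2 * Bt ^+ 2 + 2 * f x ^+ 2))).
  - by apply/measurable_EFinP; exact: hmeas.
  - move=> x Dx /=; rewrite lee_fin.
    have hb := gbound th' x Dx; rewrite -/Bt in hb.
    rewrite ger0_norm ?sqr_ge0 // ger0_norm; last by have := sqr_ge0 Bt; have := sqr_ge0 (f x); nra.
    move: hb; rewrite ler_norml => /andP [hb1 hb2].
    have := sqr_ge0 (g th' x + f x).
    have : 0 <= (Bt - g th' x) * (Bt + g th' x) by apply: mulr_ge0; lra.
    nra.
  - apply: intD; apply: intZ => //.
    exact: intC.
set F := @loss R m d mu V W sig K f.
set I := fun th' => Rintegral mu (@sphere R d)
   (fun x : BorelcV R d => (g th' x - f x) ^+ 2).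
have Fval : forall th', F th' = 2^-1 * I th'.
  move=> th'; rewrite /F /loss /I; congr (_ * _); apply: eq_Rintegral => x _.
  by rewrite netout_dfwith.
set I0 := I th.
have I00 : 0 <= I0 by apply: Rintegral_ge0 => x _; exact: sqr_ge0.
have L2E : L2norm mu (fun x => netout V W sig K.+1 x - f x) = Num.sqrt I0 by [].
have muD0 : 0 <= muD by rewrite /muD fine_ge0 // measure_ge0.
set B1 := CW * Csig * Q0 ^+ K.
have B10 : 0 <= B1 by rewrite /B1 !mulr_ge0 ?exprn_ge0.
have key : forall H : 'M[R]_(m K.+1, m K),
    (forall x, @sphere R d x -> vnorm (H *m act V W sig x K) <= vnorm (act V W sig x K)) ->
    \sum_i \sum_j G n i j * H i j <= Num.sqrt I0 * (B1 * Num.sqrt muD).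
  move=> H hH.
  have [dF hG] := hgrad n.
  rewrite -hG.
  apply: amgm_lim; [exact: sqrtr_ge0 | by rewrite mulr_ge0 ?sqrtr_ge0 | ].
  move=> s s0.
  apply: (diff_le (Q := B1 ^+ 2 * muD / 2) dF) => t t0.
  rewrite -/F -/th !Fval sqr_sqrtr // exprMn sqr_sqrtr //.
  set It := I (t *: H + th).
  have hIt : It <= (1 + t * s) * I0 + (1 + (t * s)^-1) * (t * B1) ^+ 2 * muD.
    have -> : (1 + t * s) * I0 + (1 + (t * s)^-1) * (t * B1) ^+ 2 * muD =
        Rintegral mu (@sphere R d) (fun x : BorelcV R d =>
          (1 + t * s) * (g th x - f x) ^+ 2 + (1 + (t * s)^-1) * (t * B1) ^+ 2).
      rewrite RintegralD //; last by exact: intC.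
        by rewrite RintegralZl // Rintegral_cst.
      exact: intZ.
    apply: le_Rintegral => //; first exact: intD (intZ _ (hint th)) (intC _ _).
    move=> x Dx.
    have hd : `|g (t *: H + th) x - g th x| <= t * B1.
      apply: le_trans (glip _ _ x) _.
      rewrite addrK -scalemxAl vnormZ ger0_norm ?(ltW t0) //.
      rewrite /B1 mulrCA ler_wpM2l ?(ltW t0) // ler_wpM2l ?mulr_ge0 //.
      exact: le_trans (hH x Dx) (abound x Dx).
    have -> : g (t *: H + th) x - f x = (g th x - f x) + (g (t *: H + th) x - g th x)
      by ring.
    apply: le_trans (sq_split _ _ (mulr_gt0 t0 s0)) _.
    rewrite lerD2l; apply: ler_wpM2l.
      have h : 0 < (t * s)^-1 by rewrite invr_gt0 mulr_gt0.
      lra.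
    move: hd; rewrite ler_norml => /andP [hd1 hd2].
    have : 0 <= (t * B1 - (g (t *: H + th) x - g th x)) * (t * B1 + (g (t *: H + th) x - g th x)).
      by apply: mulr_ge0; lra.
    nra.
  have ts0 : t * s != 0 by rewrite mulf_neq0 // gt_eqF.
  have e1 : (1 + (t * s)^-1) * (t * B1) ^+ 2 * muD =
      t ^+ 2 * (B1 ^+ 2 * muD) + t * (B1 ^+ 2 * muD / s).
    by field; rewrite (gt_eqF s0) (gt_eqF t0).
  rewrite e1 in hIt.
  have e2 : t * ((s * I0 + B1 ^+ 2 * muD / s) / 2) + t ^+ 2 * (B1 ^+ 2 * muD / 2)
     = 2^-1 * ((t * s) * I0 + t * (B1 ^+ 2 * muD / s) + t ^+ 2 * (B1 ^+ 2 * muD)).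
    by field; rewrite (gt_eqF s0).
  change (I (Ws n K)) with I0.
  rewrite e2 -mulrBr ler_pM2l ?invr_gt0 //; lra.
have Bx0 : 0 <= Bx by rewrite /Bx !mulr_ge0 ?exprn_ge0 ?sqrtr_ge0 // /Q0 !mulr_ge0 ?sqrtr_ge0.
have BxE : Bx = B1 * Num.sqrt muD by rewrite /Bx /B1 /Q0; ring.
rewrite L2E.
apply: (@le_trans _ _ (Bx * Num.sqrt I0)); last first.
  by rewrite ler_wpM2r ?sqrtr_ge0 //; apply: le_trans (ler_norm Bx) _; lra.
apply: specnorm_le => v v1.
set w := G n *m v.
have [w0|wn0] := eqVneq (vnorm w) 0.
  by rewrite w0 mulr_ge0 ?sqrtr_ge0.
set u := (vnorm w)^-1 *: w.
have u1 : vnorm u = 1.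
  by rewrite /u vnormZ ger0_norm ?invr_ge0 ?vnorm_ge0 // mulVf.
have := key (u *m v^T) (fun x _ => rank1_bound (act V W sig x K) u1 v1).
rewrite sum_rank1 -/w sum_normalized // BxE => h.
by rewrite mulrC.
Qed.
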